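(* Let $r>0$, $0<p<1$, $q=1-p$, and $X\sim\mathcal{UNB}(r,p)$. Then $$\mathbb{E}(X)=\frac{rq}{2p},\qquad \mathbb{V}(X)=\frac{rq}{12p}\left(6+\frac{4q}{p}+\frac{rq}{p}\right),$$ and the index of dispersion satisfies $\frac{\mathbb{V}(X)}{\mathbb{E}(X)}=1+\frac{4q}{6p}+\frac{rq}{6p}>1$, so $X$ is always overdispersed.
   Context: $\mathcal{UNB}(r,p)$ is the law of $X$ where $N$ is negative binomial with $P(N=n)=\binom{r+n-1}{n}p^rq^n=\frac{\Gamma(r+n)}{n!\Gamma(r)}p^rq^n$, $n\ge0$, and conditionally on $N=n$, $X$ is uniform on $\{0,1,\dots,n\}$. *)

(* Defs.v *)
From Stdlib Require Import Reals.
From Coquelicot Require Import Coquelicot.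
Open Scope R_scope.

(* rising factorial r (r+1) ... (r+n-1) = Gamma(r+n)/Gamma(r) for r > 0 *)
Fixpoint rising (r : R) (n : nat) : R :=
  match n with
  | O => 1
  | S m => rising r m * (r + INR m)
  end.

(* negative binomial pmf: P(N = n) = Gamma(r+n)/(n! Gamma(r)) p^r q^n *)
Definition nb_pmf (r p : R) (n : nat) : R :=
  rising r n / INR (Factorial.fact n) * Rpower p r * (1 - p) ^ n.

Definition unb_pmf (r p : R) (k : nat) : R :=
  Series (fun j => nb_pmf r p (k + j) / INR (k + j + 1)).

Definition expect (f : nat -> R) : R := Series (fun k => INR k * f k).
Definition variance (f : nat -> R) : R :=
  Series (fun k => (INR k - expect f) ^ 2 * f k).

(* Main.v *)
From Stdlib Require Import Reals Lra Lia.
From Coquelicot Require Import Coquelicot.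
Require Import Defs.
Open Scope R_scope.

Lemma is_series_Rplus (a b : nat -> R) (la lb : R) : is_series a la -> is_series b lb ->
  is_series (fun n => a n + b n) (la+lb).
Proof. intros H H0. exact (is_series_plus _ _ _ _ H H0). Qed.
Lemma is_series_Rscal (c : R) (a : nat -> R) (l : R) : is_series a l -> is_series (fun n => c * a n) (c*l).
Proof. intros H. exact (is_series_scal_l _ _ _ H). Qed.
Lemma is_series_lim (a : nat -> R) (l : R) : is_series a l <-> is_lim_seq (sum_f_R0 a) l.
Proof.
  split; intro H.
  - apply is_lim_seq_ext with (sum_n a). intro; apply sum_n_Reals. exact H.
  - assert (H' : is_lim_seq (sum_n a) l).
    { apply is_lim_seq_ext with (sum_f_R0 a). intro; symmetry; apply sum_n_Reals. exact H. }
    exact H'.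
Qed.
Lemma Series_nonneg (b : nat -> R) : (forall n, 0 <= b n) -> ex_series b -> 0 <= Series b.
Proof.
  intros Hb Hex.
  assert (H := Series_le (fun n => 0 * b n) b).
  rewrite Series_scal_l, Rmult_0_l in H. apply H; auto.
  intro n; split; [lra| specialize (Hb n); lra].
Qed.
Lemma is_series_eq (a b : nat -> R) (l1 l2 : R) : is_series a l1 -> is_series b l2 ->
  (forall n, a n = b n) -> l1 = l2.
Proof.
  intros H1 H2 He. apply is_series_unique in H1. apply is_series_unique in H2.
  rewrite <- H1, <- H2. apply Series_ext; auto.
Qed.

Lemma sum_mono (g : nat -> R) : (forall k, 0 <= g k) ->
  forall n m, (n <= m)%nat -> sum_f_R0 g n <= sum_f_R0 g m.
Proof.
  intros Hg n m Hnm. induction Hnm. lra. simpl. specialize (Hg (S m)). lra.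
Qed.

Lemma tail_ex (b g : nat -> R) L : (forall n, 0 <= b n) -> (forall k, 0 <= g k) ->
  ex_series b -> is_series (fun n => b n * sum_f_R0 g n) L ->
  is_series (fun k => g k * Series (fun j => b (k+j)%nat)) L.
Proof.
  intros Hb Hg Hex HL.
  set (T := fun k => Series (fun j => b (k+j)%nat)).
  set (G := sum_f_R0 g) in *.
  assert (exT : forall k, ex_series (fun j => b (k+j)%nat)).
  { intro k. apply (ex_series_incr_n b k). exact Hex. }
  assert (Trec : forall k, T k = b k + T (S k)).
  { intro k. unfold T. rewrite Series_incr_1 by apply exT.
    rewrite Nat.add_0_r. f_equal. apply Series_ext. intro j. f_equal. lia. }
  assert (Tpos : forall k, 0 <= T k).
  { intro k. apply Series_nonneg; auto. }
  assert (partial : forall K, sum_f_R0 (fun k => g k * T k) K =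
     sum_f_R0 (fun n => b n * G n) K + G K * T (S K)).
  { induction K.
    - simpl. unfold G; simpl. rewrite (Trec 0%nat). ring.
    - simpl. rewrite IHK. unfold G. simpl. rewrite (Trec (S K)). ring. }
  assert (exBG : ex_series (fun n => b n * G n)) by (exists L; exact HL).
  assert (tail : forall K, L - sum_f_R0 (fun n => b n * G n) K =
        Series (fun j => b (S K + j)%nat * G (S K + j)%nat)).
  { intro K. apply is_series_unique in HL.
    rewrite <- HL. rewrite (Series_incr_n (fun n => b n * G n) (S K)) by (auto; lia). simpl. ring. }
  assert (bound : forall K, 0 <= G K * T (S K) <= L - sum_f_R0 (fun n => b n * G n) K).
  { intro K. split.
    - apply Rmult_le_pos. unfold G; apply cond_pos_sum; auto. auto.
    - rewrite tail. unfold T. rewrite <- Series_scal_l. apply Series_le.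
      + intro j. split. apply Rmult_le_pos. unfold G; apply cond_pos_sum; auto. auto.
        rewrite Rmult_comm. apply Rmult_le_compat_l. auto.
        unfold G. apply sum_mono; auto. lia.
      + apply (ex_series_incr_n (fun n => b n * G n) (S K)). exact exBG. }
  apply is_series_lim. apply is_series_lim in HL.
  apply is_lim_seq_le_le with (u := sum_f_R0 (fun n => b n * G n)) (w := fun _ => L).
  - intro K. fold T. rewrite partial. specialize (bound K). lra.
  - exact HL.
  - apply is_lim_seq_const.
Qed.

Definition aa (r : R) (n : nat) : R := rising r n / INR (Factorial.fact n).

Lemma rising_pos r n : 0 < r -> 0 < rising r n.
Proof. intro hr. induction n; simpl. lra. apply Rmult_lt_0_compat; auto. pose proof (pos_INR n); lra. Qed.

Lemma aa_pos r n : 0 < r -> 0 < aa r n.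
Proof. intro hr. unfold aa. apply Rdiv_lt_0_compat. now apply rising_pos. apply INR_fact_lt_0. Qed.

Lemma aa_succ r n : aa r (S n) = (r + INR n) * aa r n / (INR n + 1).
Proof.
  unfold aa. simpl rising. change (Factorial.fact (S n)) with (S n * Factorial.fact n)%nat. rewrite mult_INR, S_INR.
  pose proof (INR_fact_neq_0 n). pose proof (pos_INR n).
  field. split; auto. lra.
Qed.

Lemma lim_inv : is_lim_seq (fun n => / (INR n + 1)) 0.
Proof.
  assert (H : is_lim_seq (fun n => INR (S n)) p_infty).
  { apply (is_lim_seq_incr_1 INR). apply is_lim_seq_INR. }
  apply is_lim_seq_inv in H; [| discriminate].
  change (Rbar_inv p_infty) with (Finite 0) in H. eapply is_lim_seq_ext; [| exact H]. intro n. rewrite <- S_INR. reflexivity.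
Qed.

Lemma CV_aa r : 0 < r -> CV_radius (aa r) = 1.
Proof.
  intro hr. rewrite (CV_radius_finite_DAlembert _ 1).
  - rewrite Rinv_1; reflexivity.
  - intro n. pose proof (aa_pos r n hr). lra.
  - lra.
  - assert (H : is_lim_seq (fun n => 1 + (r - 1) * / (INR n + 1)) (1 + (r-1)*0)).
    { apply is_lim_seq_plus'. apply is_lim_seq_const.
      apply is_lim_seq_mult'. apply is_lim_seq_const. apply lim_inv. }
    replace (1 + (r-1)*0) with 1 in H by ring.
    apply is_lim_seq_abs in H. simpl in H. rewrite Rabs_R1 in H.
    eapply is_lim_seq_ext; [| exact H]. intro n.
    rewrite aa_succ. pose proof (aa_pos r n hr). pose proof (pos_INR n).
    replace ((r + INR n) * aa r n / (INR n + 1) / aa r n) with (1 + (r - 1) * / (INR n + 1)). reflexivity. field. lra.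
Qed.

Definition cc (r q : R) (n : nat) : R := aa r n * q ^ n.

Lemma cc_succ r q n : cc r q (S n) = q * (r + INR n) * cc r q n / (INR n + 1).
Proof. unfold cc. rewrite aa_succ. simpl. pose proof (pos_INR n). field. lra. Qed.

Lemma cc_pos r q n : 0 < r -> 0 < q -> 0 < cc r q n.
Proof. intros. unfold cc. apply Rmult_lt_0_compat. now apply aa_pos. now apply pow_lt. Qed.

Lemma ex_e r q : 0 < r -> 0 < q < 1 -> ex_series (fun n => (INR n + 1)^2 * cc r q n).
Proof.
  intros hr hq. apply ex_series_Rabs.
  apply (ex_series_DAlembert _ q). lra.
  - intro n. pose proof (cc_pos r q n hr (proj1 hq)). pose proof (pos_INR n). nra.
  - assert (H : is_lim_seq (fun n => q * ((1 + / (INR n + 1)) * (1 + / (INR n + 1)) * (1 + (r - 1) * / (INR n + 1)))) (q * ((1 + 0) * (1 + 0) * (1 + (r-1)*0)))).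
    { apply is_lim_seq_mult'. apply is_lim_seq_const.
      apply is_lim_seq_mult'. apply is_lim_seq_mult';
      (apply is_lim_seq_plus'; [apply is_lim_seq_const| apply lim_inv]).
      apply is_lim_seq_plus'. apply is_lim_seq_const.
      apply is_lim_seq_mult'. apply is_lim_seq_const. apply lim_inv. }
    replace (q * ((1 + 0) * (1 + 0) * (1 + (r-1)*0))) with q in H by ring.
    apply is_lim_seq_abs in H. simpl in H. rewrite Rabs_pos_eq in H by lra.
    eapply is_lim_seq_ext; [| exact H]. intro n.
    rewrite cc_succ, S_INR. pose proof (cc_pos r q n hr (proj1 hq)). pose proof (pos_INR n).
    replace ((INR n + 1 + 1) ^ 2 * (q * (r + INR n) * cc r q n / (INR n + 1)) / ((INR n + 1) ^ 2 * cc r q n)) with (q * ((1 + / (INR n + 1)) * (1 + / (INR n + 1)) * (1 + (r - 1) * / (INR n + 1)))). reflexivity. field. lra.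
Qed.
Lemma is_series_ext_R (a b : nat -> R) (l : R) : (forall n, a n = b n) -> is_series a l -> is_series b l.
Proof. intros H H0. exact (is_series_ext a b l H H0). Qed.

Lemma is_series_unshift (a : nat -> R) (l : R) : a 0%nat = 0 -> is_series (fun k => a (S k)) l -> is_series a l.
Proof.
  intros H0 H. apply is_series_decr_1.
  match goal with |- is_series _ ?z => replace z with l end. exact H.
  rewrite H0. unfold plus, opp; simpl. ring.
Qed.

Lemma expseries_R (a : nat -> R) x : ex_pseries a x -> ex_series (fun k => a k * x^k).
Proof.
  intro H. apply ex_series_ext with (2 := H). intro k. rewrite pow_n_pow.
  unfold scal; simpl. unfold mult; simpl. apply Rmult_comm.
Qed.

Lemma Rseries_of_ex (a : nat -> R) : ex_series a -> is_series a (Series a).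
Proof. intro H. apply Series_correct. exact H. Qed.

Lemma deriv_rel r x : 0 < r -> Rabs x < 1 ->
  (1 - x) * PSeries (PS_derive (aa r)) x = r * PSeries (aa r) x.
Proof.
  intros hr hx.
  assert (Hrad : Rbar_lt (Rabs x) (CV_radius (aa r))) by (rewrite CV_aa by exact hr; exact hx).
  set (D := PSeries (PS_derive (aa r)) x).
  set (A := PSeries (aa r) x).
  assert (HD : is_series (fun k => (r + INR k) * aa r k * x ^ k) D).
  { apply is_series_ext_R with (fun k => PS_derive (aa r) k * x ^ k).
    - intro k. unfold PS_derive. rewrite aa_succ, S_INR. pose proof (pos_INR k). field. lra.
    - apply Rseries_of_ex. apply expseries_R. apply ex_pseries_derive. exact Hrad. }
  assert (HA : is_series (fun k => aa r k * x ^ k) A).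
  { apply Rseries_of_ex. apply expseries_R. apply CV_radius_inside. exact Hrad. }
  assert (HB : is_series (fun k => INR k * aa r k * x ^ k) (x * D)).
  { apply is_series_unshift. simpl; ring.
    apply is_series_ext_R with (fun k => x * ((r + INR k) * aa r k * x ^ k)).
    - intro k. rewrite aa_succ, S_INR. simpl. pose proof (pos_INR k). field. lra.
    - apply is_series_Rscal. exact HD. }
  assert (HD2 : is_series (fun k => (r + INR k) * aa r k * x ^ k) (r * A + x * D)).
  { apply is_series_ext_R with (fun k => r * (aa r k * x ^ k) + INR k * aa r k * x ^ k).
    - intro k. ring.
    - apply is_series_Rplus. apply is_series_Rscal. exact HA. exact HB. }
  assert (E := is_series_eq _ _ _ _ HD HD2 (fun _ => eq_refl)).
  fold D A. lra.
Qed.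

Lemma norm_aa r p : 0 < r -> 0 < p < 1 -> Rpower p r * PSeries (aa r) (1 - p) = 1.
Proof.
  intros hr hp.
  set (g := fun t => exp (r * ln (1 - t)) * PSeries (aa r) t).
  assert (Heq : g 0 = g (1 - p)).
  { apply eq_is_derive; [| lra].
    intros t Ht.
    assert (ht : Rabs t < 1) by (rewrite Rabs_pos_eq; lra).
    assert (Hrad : Rbar_lt (Rabs t) (CV_radius (aa r))) by (rewrite CV_aa by exact hr; exact ht).
    assert (Hd1 : is_derive (fun t => exp (r * ln (1 - t))) t (- r / (1 - t) * exp (r * ln (1 - t)))).
    { auto_derive. lra. unfold Rminus. field. lra. }
    assert (Hd2 := is_derive_PSeries _ _ Hrad).
    assert (Hm := is_derive_mult _ _ t _ _ Hd1 Hd2 Rmult_comm).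
    assert (Hrel := deriv_rel r t hr ht).
    match goal with |- is_derive _ _ ?z => match type of Hm with is_derive _ _ ?w =>
      replace z with w; [exact Hm|] end end.
    unfold plus, mult, zero; simpl.
    assert (0 < 1 - t) by lra.
    set (E := exp (r * ln (1 - t))). set (A := PSeries (aa r) t).
    set (D := PSeries (PS_derive (aa r)) t). fold D A in Hrel.
    assert (HD : D = r * A / (1 - t)).
    { apply (Rmult_eq_reg_l (1 - t)); [| lra]. rewrite Hrel. field. lra. }
    rewrite HD. field. lra. }
  unfold g in Heq. rewrite Rminus_0_r, ln_1, Rmult_0_r, exp_0, PSeries_0 in Heq.
  replace (1 - (1 - p)) with p in Heq by ring.
  unfold Rpower. rewrite <- Heq. unfold aa. simpl. field.
Qed.

Lemma is_series_shift (a : nat -> R) (l : R) : a 0%nat = 0 -> is_series a l -> is_series (fun k => a (S k)) l.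
Proof.
  intros H0 H. apply is_series_incr_1.
  match goal with |- is_series _ ?z => replace z with l end. exact H.
  rewrite H0. unfold plus; simpl. ring.
Qed.

Lemma ex_series_le_R (a b : nat -> R) : (forall n, Rabs (a n) <= b n) -> ex_series b -> ex_series a.
Proof. intros H H0. apply (@ex_series_le R_AbsRing R_CompleteNormedModule a b); auto. Qed.

Lemma nb_cc r p n : nb_pmf r p n = Rpower p r * cc r (1 - p) n.
Proof. unfold nb_pmf, cc, aa. ring. Qed.

Lemma moments r p : 0 < r -> 0 < p < 1 ->
  is_series (nb_pmf r p) 1 /\
  is_series (fun n => INR n * nb_pmf r p n) (r * (1 - p) / p) /\
  is_series (fun n => INR n ^ 2 * nb_pmf r p n) (r * (1 - p) * (r * (1 - p) + 1) / p ^ 2).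
Proof.
  intros hr hp.
  set (q := 1 - p). set (P := Rpower p r).
  assert (hq : 0 < q < 1) by (unfold q; lra).
  assert (Hc := ex_e r q hr hq).
  assert (cpos : forall n, 0 < cc r q n) by (intro; apply cc_pos; lra).
  assert (ex0 : ex_series (cc r q)).
  { apply ex_series_le_R with (2 := Hc). intro n.
    rewrite Rabs_pos_eq by (apply Rlt_le, cpos). specialize (cpos n). pose proof (pos_INR n). nra. }
  assert (ex1 : ex_series (fun n => INR n * cc r q n)).
  { apply ex_series_le_R with (2 := Hc). intro n.
    specialize (cpos n). pose proof (pos_INR n).
    rewrite Rabs_pos_eq by nra. nra. }
  assert (ex2 : ex_series (fun n => INR n ^ 2 * cc r q n)).
  { apply ex_series_le_R with (2 := Hc). intro n.
    specialize (cpos n). pose proof (pos_INR n).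
    rewrite Rabs_pos_eq by nra. nra. }
  set (F := Series (cc r q)). set (M1 := Series (fun n => INR n * cc r q n)).
  set (M2 := Series (fun n => INR n ^ 2 * cc r q n)).
  assert (H0 : is_series (cc r q) F) by (apply Series_correct; exact ex0).
  assert (H1 : is_series (fun n => INR n * cc r q n) M1) by (apply Series_correct; exact ex1).
  assert (H2 : is_series (fun n => INR n ^ 2 * cc r q n) M2) by (apply Series_correct; exact ex2).
  assert (PF : P * F = 1) by (apply norm_aa; auto).
  assert (R1 : M1 = q * (r * F + M1)).
  { assert (A : is_series (fun k => INR (S k) * cc r q (S k)) M1) by (apply (is_series_shift (fun n => INR n * cc r q n)); [simpl; ring | exact H1]).
    assert (B : is_series (fun n => q * (r * cc r q n + INR n * cc r q n)) (q * (r * F + M1))).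
    { apply is_series_Rscal. apply is_series_Rplus. apply is_series_Rscal. exact H0. exact H1. }
    apply (is_series_eq _ _ _ _ A B). intro n. rewrite cc_succ, S_INR.
    pose proof (pos_INR n). field. lra. }
  assert (R2 : M2 = q * (M2 + (r + 1) * M1 + r * F)).
  { assert (A : is_series (fun k => INR (S k) ^ 2 * cc r q (S k)) M2) by (apply (is_series_shift (fun n => INR n ^ 2 * cc r q n)); [simpl; ring | exact H2]).
    assert (B : is_series (fun n => q * (INR n ^ 2 * cc r q n + (r + 1) * (INR n * cc r q n) + r * cc r q n)) (q * (M2 + (r + 1) * M1 + r * F))).
    { apply is_series_Rscal. apply is_series_Rplus. apply is_series_Rplus. exact H2.
      apply is_series_Rscal. exact H1. apply is_series_Rscal. exact H0. }
    apply (is_series_eq _ _ _ _ A B). intro n. rewrite cc_succ, S_INR.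
    pose proof (pos_INR n). field. lra. }
  assert (X1 : P * M1 = r * q / p).
  { assert (M1 * p = q * r * F) by (unfold q in *; lra).
    assert (E : M1 = q * r * F / p) by (rewrite <- H; field; lra).
    rewrite E. replace (P * (q * r * F / p)) with (q * r * (P * F) / p) by (field; lra).
    rewrite PF. field. lra. }
  assert (X2 : P * M2 = r * q * (r * q + 1) / p ^ 2).
  { assert (M2 * p = q * ((r + 1) * M1 + r * F)) by (unfold q in *; lra).
    assert (E : M2 = q * ((r + 1) * M1 + r * F) / p) by (rewrite <- H; field; lra).
    rewrite E. replace (P * (q * ((r + 1) * M1 + r * F) / p)) with (q * ((r + 1) * (P * M1) + r * (P * F)) / p) by (field; lra).
    rewrite X1, PF. unfold q. field. lra. }
  split; [| split].
  - apply is_series_ext_R with (fun n => P * cc r q n). intro; symmetry; apply nb_cc.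
    rewrite <- PF. apply is_series_Rscal. exact H0.
  - apply is_series_ext_R with (fun n => P * (INR n * cc r q n)). intro; rewrite nb_cc; unfold P, q; ring.
    fold q. rewrite <- X1. apply is_series_Rscal. exact H1.
  - apply is_series_ext_R with (fun n => P * (INR n ^ 2 * cc r q n)). intro; rewrite nb_cc; unfold P, q; ring.
    fold q. rewrite <- X2. apply is_series_Rscal. exact H2.
Qed.

Lemma sum_one n : sum_f_R0 (fun _ => 1) n = INR n + 1.
Proof. rewrite sum_cte, S_INR. ring. Qed.
Lemma sum_id n : sum_f_R0 INR n = INR n * (INR n + 1) / 2.
Proof. induction n. simpl. field. rewrite tech5, IHn, S_INR. field. Qed.
Lemma sum_sq n : sum_f_R0 (fun k => INR k ^ 2) n = INR n * (INR n + 1) * (2 * INR n + 1) / 6.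
Proof. induction n. simpl. field. rewrite tech5, IHn, S_INR. field. Qed.

Theorem mainTheorem8 (r p : R) (hr : 0 < r) (hp0 : 0 < p) (hp1 : p < 1) :
  let q := 1 - p in
  let f := unb_pmf r p in
  ex_series (fun k => INR k * f k) /\
  ex_series (fun k => (INR k - expect f) ^ 2 * f k) /\
  expect f = r * q / (2 * p) /\
  variance f = r * q / (12 * p) * (6 + 4 * q / p + r * q / p) /\
  variance f / expect f = 1 + 4 * q / (6 * p) + r * q / (6 * p) /\
  variance f / expect f > 1.
Proof.
  intros q f.
  destruct (moments r p hr (conj hp0 hp1)) as [N0 [N1 N2]].
  fold q in N1, N2.
  assert (nbpos : forall n, 0 < nb_pmf r p n).
  { intro n. rewrite nb_cc. apply Rmult_lt_0_compat. apply exp_pos. apply cc_pos; lra. }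
  assert (bpos : forall n, 0 <= nb_pmf r p n / INR (n + 1)).
  { intro n. rewrite plus_INR. simpl. pose proof (pos_INR n). specialize (nbpos n).
    apply Rlt_le, Rdiv_lt_0_compat; lra. }
  assert (bex : ex_series (fun n => nb_pmf r p n / INR (n + 1))).
  { apply ex_series_le_R with (nb_pmf r p). intro n.
    rewrite Rabs_pos_eq by apply bpos. rewrite plus_INR. simpl. pose proof (pos_INR n). specialize (nbpos n).
    apply Rle_trans with (nb_pmf r p n / 1). apply Rmult_le_compat_l. lra.
    apply Rinv_le_contravar; lra. lra. exists 1; exact N0. }
  assert (HE0 : is_series f 1).
  { assert (H := tail_ex (fun n => nb_pmf r p n / INR (n + 1)) (fun _ => 1) 1 bpos
      ltac:(intro; lra) bex).
    assert (H' : is_series (fun n => nb_pmf r p n / INR (n + 1) * sum_f_R0 (fun _ => 1) n) 1).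
    { eapply is_series_ext_R; [| exact N0]. intro n. rewrite sum_one, plus_INR. simpl.
      pose proof (pos_INR n). field. lra. }
    eapply is_series_ext_R; [| exact (H H')].
    intro k. simpl. rewrite Rmult_1_l. reflexivity. }
  assert (HE1 : is_series (fun k => INR k * f k) (r * q / (2 * p))).
  { assert (H := tail_ex (fun n => nb_pmf r p n / INR (n + 1)) INR (r * q / (2 * p)) bpos
      pos_INR bex).
    assert (H' : is_series (fun n => nb_pmf r p n / INR (n + 1) * sum_f_R0 INR n) (r * q / (2 * p))).
    { replace (r * q / (2 * p)) with (/2 * (r * q / p)) by (field; lra).
      eapply is_series_ext_R; [| apply is_series_Rscal; exact N1]. intro n. rewrite sum_id, plus_INR. simpl.
      pose proof (pos_INR n). field. lra. }
    eapply is_series_ext_R; [| exact (H H')].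
    intro k. reflexivity. }
  set (s2 := / 6 * (2 * (r * q * (r * q + 1) / p ^ 2) + r * q / p)).
  assert (HE2 : is_series (fun k => INR k ^ 2 * f k) s2).
  { assert (H := tail_ex (fun n => nb_pmf r p n / INR (n + 1)) (fun k => INR k ^ 2) s2 bpos
      ltac:(intro; apply pow2_ge_0) bex).
    assert (H' : is_series (fun n => nb_pmf r p n / INR (n + 1) * sum_f_R0 (fun k => INR k ^ 2) n) s2).
    { unfold s2. apply (is_series_Rscal 2) in N2. apply is_series_Rplus with (2 := N1) in N2.
      apply (is_series_Rscal (/6)) in N2.
      eapply is_series_ext_R; [| exact N2]. intro n. rewrite sum_sq, plus_INR. simpl.
      pose proof (pos_INR n). field. lra. }
    eapply is_series_ext_R; [| exact (H H')].
    intro k. reflexivity. }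
  assert (Hm : expect f = r * q / (2 * p)) by (apply is_series_unique; exact HE1).
  set (m := r * q / (2 * p)) in *.
  assert (HV : is_series (fun k => (INR k - expect f) ^ 2 * f k) (s2 + (-2 * m) * m + m ^ 2 * 1)).
  { rewrite Hm. eapply is_series_ext_R.
    2: { apply is_series_Rplus. apply is_series_Rplus. exact HE2.
         apply is_series_Rscal. exact HE1. apply is_series_Rscal. exact HE0. }
    intro k. simpl. ring. }
  assert (Hv : variance f = s2 + (-2 * m) * m + m ^ 2 * 1) by (apply is_series_unique; exact HV).
  assert (Vval : variance f = r * q / (12 * p) * (6 + 4 * q / p + r * q / p)).
  { rewrite Hv. unfold s2, m, q. field. lra. }
  assert (qpos : 0 < q) by (unfold q; lra).
  split; [exists m; exact HE1 |].
  split; [eexists; exact HV |].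
  split; [exact Hm |].
  split; [exact Vval |].
  assert (Rat : variance f / expect f = 1 + 4 * q / (6 * p) + r * q / (6 * p)).
  { rewrite Vval, Hm. unfold m. field. repeat split; lra. }
  split; [exact Rat |].
  rewrite Rat. assert (0 < 4 * q / (6 * p)) by (apply Rdiv_lt_0_compat; lra).
  assert (0 < r * q / (6 * p)) by (apply Rdiv_lt_0_compat; nra). lra.
Qed.
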